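(* There is an absolute constant $C>0$ such that for all positive integers $n,d$ and every nonempty family $E$ of subsets of $[n]$, each of size at most $d$, there exists a three-stage group testing algorithm that finds the defective hyperedge in $E$ and uses at most $C\left(\sqrt d\,\log|E|+d\right)$ tests.
   Context: Group testing on a hypergraph: items are $[n]=\{1,\dots,n\}$, $E$ is a family of subsets of $[n]$ (hyperedges), exactly one $e^*\in E$ is defective (unknown); a test on a pool $T\subseteq[n]$ is positive iff $T\cap e^*\neq\emptyset$. A three-stage algorithm consists of three stages, each a non-adaptive set of tests performed in parallel: the stage-1 pools are fixed in advance, the stage-2 pools are determined by the stage-1 responses, and the stage-3 pools by the stage-1 and stage-2 responses. It finds the defective hyperedge iff for any two distinct $e^*,f\in E$ the sequences of all responses obtained when $e^*$ is defective and when $f$ is defective differ. The number of tests is the maximum over $e^*\in E$ of the total number of pools tested. Logarithms to a fixed base. *)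

(* Defs.v *)
From mathcomp Require Import all_boot.
From Stdlib Require Import Reals.

Set Implicit Arguments.
Unset Strict Implicit.
Unset Printing Implicit Defensive.

Definition test_resp (n : nat) (e : {set 'I_n}) (T : {set 'I_n}) : bool :=
  T :&: e != set0.

(* A three-stage algorithm: stage-1 pools fixed; stage-2 pools are a function
   of the stage-1 responses; stage-3 pools are a function of the stage-1 and
   stage-2 responses. *)
Record three_stage (n : nat) := ThreeStage {
  stage1 : seq {set 'I_n};
  stage2 : seq bool -> seq {set 'I_n};
  stage3 : seq bool -> seq bool -> seq {set 'I_n}
}.

Definition resp1 n (A : three_stage n) (e : {set 'I_n}) : seq bool :=
  map (test_resp e) (stage1 A).
Definition resp2 n (A : three_stage n) (e : {set 'I_n}) : seq bool :=
  map (test_resp e) (stage2 A (resp1 A e)).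
Definition resp3 n (A : three_stage n) (e : {set 'I_n}) : seq bool :=
  map (test_resp e) (stage3 A (resp1 A e) (resp2 A e)).

Definition responses n (A : three_stage n) (e : {set 'I_n})
  : seq bool * seq bool * seq bool :=
  (resp1 A e, resp2 A e, resp3 A e).

Definition finds n (A : three_stage n) (E : {set {set 'I_n}}) : Prop :=
  forall e f, e \in E -> f \in E -> e <> f -> responses A e <> responses A f.

Definition ntests_for n (A : three_stage n) (e : {set 'I_n}) : nat :=
  size (stage1 A) + size (stage2 A (resp1 A e))
  + size (stage3 A (resp1 A e) (resp2 A e)).

Definition ntests n (A : three_stage n) (E : {set {set 'I_n}}) : nat :=
  \max_(e in E) ntests_for A e.

(* Main.v *)
Require Import Defs.
From mathcomp Require Import all_boot.
From Stdlib Require Import Reals.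
From mathcomp Require Import zify.
From Stdlib Require Import Lra.
From mathcomp Require Import ssrnat finfun.
Set Implicit Arguments. Unset Strict Implicit. Unset Printing Implicit Defensive.

Lemma card_fam n K (F : 'I_n -> pred 'I_K) :
  #|[set w : {ffun 'I_n -> 'I_K} | [forall x, F x (w x)]]| = \prod_(x : 'I_n) #|F x|.
Proof.
have -> : #|[set w : {ffun 'I_n -> 'I_K} | [forall x, F x (w x)]]| = #|(family F : simpl_pred {ffun 'I_n -> 'I_K})|.
  apply: eq_card => w; rewrite inE; apply/forallP/familyP => H x; exact: H.
rewrite card_family foldrE big_map big_enum /=. by [].
Qed.

Lemma leq_expr m n e : m <= n -> m ^ e <= n ^ e.
Proof. by case: e => [|e] // H; rewrite leq_exp2r. Qed.

Lemma bern_up K m : K ^ m * K <= (K.-1) ^ m * K + m * K ^ m.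
Proof.
elim: m => [|m IH]; first by rewrite !expn0; lia.
case: K IH => [|K] IH /=; first by rewrite !muln0.
have hle : K ^ m <= K.+1 ^ m by apply: leq_expr.
rewrite /= in IH; rewrite !expnS.
move: IH hle; set X := K.+1 ^ m; set Y := K ^ m => IH hle.
have IH2 := leq_mul2l K.+1 (X * K.+1) (Y * K.+1 + m * X); rewrite IH in IH2.
nia.
Qed.

Lemma bern2 K m : 2 * m <= K -> K ^ m <= 2 * (K.-1) ^ m.
Proof.
move=> H; have := bern_up K m.
case: K H => [|K] H; first by case: m H.
nia.
Qed.

Lemma bern_low x m : x ^ m * (x + m) <= (x.+1) ^ m * x.
Proof.
elim: m => [|m IH]; first by rewrite !expn0; lia.
rewrite !expnS.
move: IH; set X := x ^ m; set Y := x.+1 ^ m => IH.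
have IH2 := leq_mul2l x.+1 (X * (x + m)) (Y * x); rewrite IH in IH2.
nia.
Qed.

Lemma half_pow a : 0 < a -> 2 * (a.-1) ^ a <= a ^ a.
Proof.
case: a => [|a] //= _.
have := bern_low a a.+1.
case: a => [|a]; first by rewrite exp0n.
set X := a.+1 ^ a.+2; set Y := a.+2 ^ a.+2 => H.
have : (2 * X) * a.+1 <= Y * a.+1 by nia.
by rewrite leq_mul2r.
Qed.


Lemma card_sum (T : finType) (P : pred T) : #|[set x | P x]| = \sum_x (P x : nat).
Proof. by rewrite -sum1dep_card big_mkcond /=; apply: eq_bigr => x _; case: (P x). Qed.

Lemma dcount (A B : finType) (P : A -> B -> bool) :
  \sum_a #|[set b | P a b]| = \sum_b #|[set a | P a b]|.
Proof.
under eq_bigr do rewrite card_sum.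
rewrite exchange_big /=.
by under [RHS]eq_bigr do rewrite card_sum.
Qed.

Lemma avg (A B : finType) (P : A -> B -> bool) (R : {set B}) a :
  0 < #|A| -> (forall b, b \in R -> #|A| <= a * #|[set x | P x b]|) ->
  exists x, #|R| <= a * #|[set b in R | P x b]|.
Proof.
move=> A0 H.
case/boolP: [exists x, #|R| <= a * #|[set b in R | P x b]|] => [/existsP//|/existsPn Hn].
have S1 : \sum_x (a * #|[set b in R | P x b]|).+1 <= \sum_(x : A) #|R|.
  by apply: leq_sum => x _; move: (Hn x); rewrite -ltnNge.
rewrite sum_nat_const in S1.
have S2 : \sum_(b in R) #|A| <= \sum_(b in R) a * #|[set x | P x b]|.
  by apply: leq_sum => b bR; apply: H.
rewrite sum_nat_const -big_distrr /= in S2.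
have : \sum_(b in R) #|[set x | P x b]| = \sum_x #|[set b in R | P x b]|.
  rewrite -dcount big_mkcond /=; apply: eq_bigr => b _.
  case: ifP => bR.
    by [].
  by apply/esym; apply: eq_card0 => x; rewrite !inE.
move=> E1; rewrite E1 in S2.
have E2 : \sum_x (a * #|[set b in R | P x b]|).+1 = a * \sum_x #|[set b in R | P x b]| + #|A|.
  rewrite big_distrr /= -sum1_card -big_split /=; apply: eq_bigr => x _; by rewrite addn1.
rewrite E2 in S1.
have : #|A| = #|xpredT : pred A| by [].
move=> eA; rewrite -eA in S1.
move: S1 S2; set s := (\sum_x _). move=> S1 S2; rewrite [#|A| * _]mulnC in S1.
have := leq_trans S1 S2; rewrite -{2}(addn0 (a*s)) leq_add2l leqn0 => /eqP H0.
by rewrite H0 in A0.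
Qed.


Definition dist n (T : {set 'I_n}) (p : {set 'I_n} * {set 'I_n}) : bool :=
  test_resp p.1 T != test_resp p.2 T.
Definition rem n (P : {set ({set 'I_n} * {set 'I_n})}) (Ts : seq {set 'I_n}) :=
  [set p in P | ~~ has (fun T => dist T p) Ts].

Lemma greedy n (Om : finType) (pool : Om -> {set 'I_n}) a (P : {set {set 'I_n} * {set 'I_n}}) :
  0 < #|Om| -> (forall p, p \in P -> #|Om| <= a * #|[set w | dist (pool w) p]|) ->
  forall m, exists Ts, size Ts <= m /\ #|rem P Ts| * a ^ m <= #|P| * a.-1 ^ m.
Proof.
move=> Om0 HP; elim=> [|m [Ts [szTs IH]]].
  exists [::]; split=> //; rewrite !expn0 !muln1; apply: subset_leq_card.
  by apply/subsetP => p; rewrite inE => /andP[].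
set R := rem P Ts.
have HR : forall p, p \in R -> #|Om| <= a * #|[set w | dist (pool w) p]|.
  by move=> p; rewrite inE => /andP[/HP].
have [w Hw] := avg Om0 HR.
exists (pool w :: Ts); split; first by [].
have Erem : rem P (pool w :: Ts) = R :\: [set p in R | dist (pool w) p].
  apply/setP => p; rewrite !inE /=; case: (p \in P); case: (dist (pool w) p); case: has => //.
have Ecard := cardsID [set p in R | dist (pool w) p] R.
have Esub : R :&: [set p in R | dist (pool w) p] = [set p in R | dist (pool w) p].
  by apply/setIidPr/subsetP => p; rewrite inE => /andP[].
rewrite Esub in Ecard; rewrite Erem.
move: Ecard Hw IH; set c := #|[set p in R | _]|; set r' := #|R :\: _|; set r := #|R|.
move=> Ecard Hw IH.
have key : r' * a <= r * a.-1.
  case: a HP HR Hw IH => [|a] _ _ Hw IH /=; first by lia.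
  nia.
rewrite !expnS.
have := leq_mul2l a.-1 (r * a ^ m) (#|P| * a.-1 ^ m); rewrite IH /= => H2.
nia.
Qed.


Lemma greedy_all n (Om : finType) (pool : Om -> {set 'I_n}) a b (P : {set {set 'I_n} * {set 'I_n}}) :
  0 < #|Om| -> 0 < a -> #|P| < 2 ^ b ->
  (forall p, p \in P -> #|Om| <= a * #|[set w | dist (pool w) p]|) ->
  exists Ts, size Ts <= a * b /\ forall p, p \in P -> has (fun T => dist T p) Ts.
Proof.
move=> Om0 a0 Pb HP.
have [Ts [szTs H]] := greedy Om0 HP (a * b).
exists Ts; split=> // p pP.
apply/negPn/negP => Hn.
have : p \in rem P Ts by rewrite inE pP.
move=> prem.
have r1 : 0 < #|rem P Ts| by apply/card_gt0P; exists p.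
have hp : 2 ^ b * a.-1 ^ (a * b) <= a ^ (a * b).
  rewrite !expnM -expnMn; apply: leq_expr; exact: half_pow.
have apos : 0 < a ^ (a * b) by rewrite expn_gt0 a0.
move: H hp apos r1; set X := a.-1 ^ (a * b); set Y := a ^ (a * b) => H hp apos r1.
move: Pb hp; set Z := 2 ^ b => Pb hp.
have h1 : Y <= #|P| * X by apply: leq_trans H; rewrite leq_pmull.
have h2 : #|P| * X + X <= Y.
  apply: (@leq_trans (Z * X)) hp; have -> : #|P| * X + X = #|P|.+1 * X by rewrite mulSn addnC.
  by rewrite leq_mul2r Pb orbT.
have hX : X = 0 by lia.
rewrite hX muln0 in h1; lia.
Qed.


Definition pool n k (w : {ffun 'I_n -> 'I_k.+1}) : {set 'I_n} := [set x | w x == ord0].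

Definition Ax n k (U : {set 'I_n}) (x : 'I_n) : {set {ffun 'I_n -> 'I_k.+1}} :=
  [set w : {ffun 'I_n -> 'I_k.+1} | [forall y, if y == x then w y == ord0 else if y \in U then w y != ord0 else true]].

Lemma card_Ax n k (U : {set 'I_n}) x : x \in U ->
  #|Ax k U x| = k ^ (#|U|.-1) * k.+1 ^ (n - #|U|).
Proof.
move=> xU.
rewrite /Ax (card_fam (fun y (c : 'I_k.+1) => if y == x then c == ord0 else if y \in U then c != ord0 else true)).
rewrite (bigD1 x) //= eqxx.
have -> : #|(fun c : 'I_k.+1 => c == ord0)| = 1.
  by rewrite -(card1 (ord0 : 'I_k.+1)); apply: eq_card => c; rewrite !inE.
rewrite mul1n (bigID (fun y => y \in U)) /=.
have -> : \prod_(i | (i != x) && (i \in U)) #|(fun c : 'I_k.+1 => if i == x then c == ord0 else if i \in U then c != ord0 else true)| = \prod_(i in U :\ x) k.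
  apply: eq_big => [y|y /andP[/negbTE yx yU]]; first by rewrite !inE.
  rewrite yx yU.
  transitivity #|predC1 (ord0 : 'I_k.+1)|; last by rewrite cardC1 card_ord.
  by apply: eq_card => c; rewrite !inE.
have -> : \prod_(i | (i != x) && (i \notin U)) #|(fun c : 'I_k.+1 => if i == x then c == ord0 else if i \in U then c != ord0 else true)| = \prod_(i in ~: U) k.+1.
  apply: eq_big => [y|y /andP[/negbTE yx /negbTE yU]].
    rewrite !inE; case: (boolP (y == x)) => [/eqP ->|] //=; by rewrite xU.
  rewrite yx yU.
  by rewrite -[in RHS](card_ord k.+1); apply: eq_card => c; rewrite !inE.
rewrite !prod_nat_const.
have h1 : #|U :\ x| = #|U|.-1 by have := cardsD1 x U; rewrite xU; lia.
have h2 : #|~: U| = n - #|U| by have := cardsC U; rewrite card_ord; lia.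
by rewrite h1 h2.
Qed.

Lemma Ax_dist n k (e f : {set 'I_n}) x w : x \in e :\: f -> w \in Ax k (e :|: f) x ->
  dist (pool w) (e, f).
Proof.
rewrite !inE => /andP[xf xe] /forallP Hw.
rewrite /dist /test_resp /=.
have -> : pool w :&: e != set0.
  apply/set0Pn; exists x; rewrite !inE xe andbT; by have := Hw x; rewrite eqxx.
suff -> : pool w :&: f == set0 by [].
apply/eqP/setP => y; rewrite !inE; apply/negbTE; apply/negP => /andP[/eqP wy yf].
have := Hw y; case: eqP => [yx|_]; first by rewrite -yx yf in xf.
by rewrite !inE yf orbT wy eqxx.
Qed.

Lemma Ax_uniq n k (U : {set 'I_n}) x x' w : x \in U -> x' \in U -> w \in Ax k U x -> w \in Ax k U x' -> x = x'.
Proof.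
move=> xU x'U /[!inE] /forallP H1 /forallP H2.
apply/eqP; apply/negPn/negP => nx.
have := H1 x'; rewrite eq_sym (negbTE nx) x'U.
by have := H2 x'; rewrite eqxx => ->.
Qed.

Lemma prob n k s D a (e f : {set 'I_n}) :
  s <= #|e :\: f| -> #|e :|: f| <= D.+1 -> 2 * D <= k.+1 -> 2 * k.+1 <= a * s ->
  #|{ffun 'I_n -> 'I_k.+1}| <= a * #|[set w : {ffun 'I_n -> 'I_k.+1} | dist (pool w) (e, f)]|.
Proof.
move=> hs hU hD ha.
set U := e :|: f; set S := e :\: f.
have SU : S \subset U by apply/subsetP => x; rewrite !inE => /andP[_ ->].
have s0 : 0 < s by case: s ha hs => //; rewrite muln0.
have u0 : 0 < #|U|.
  have := subset_leq_card SU; rewrite /S /U; lia.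
have un : #|U| <= n by have := max_card (mem U); rewrite card_ord.
have low : #|S| * (k ^ (#|U|.-1) * k.+1 ^ (n - #|U|)) <= #|[set w : {ffun 'I_n -> 'I_k.+1} | dist (pool w) (e, f)]|.
  have E1 : \sum_x #|[set w | (x \in S) && (w \in Ax k U x)]| = #|S| * (k ^ (#|U|.-1) * k.+1 ^ (n - #|U|)).
    rewrite -sum_nat_const [RHS]big_mkcond /=; apply: eq_bigr => x _.
    case: ifP => xS.
      rewrite -(card_Ax k (x:=x)); last by apply: (subsetP SU).
      by apply: eq_card => w; rewrite !inE.
    by apply: eq_card0 => w; rewrite !inE.
  rewrite -E1 dcount card_sum.
  apply: leq_sum => w _.
  case: (boolP (dist (pool w) (e, f))) => Hd /=.
    case: (set_0Vmem [set a0 in S | w \in Ax k U a0]) => [->|[x]]; first by rewrite cards0.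
    rewrite inE => /andP[xS xA].
    rewrite -(cards1 x); apply: subset_leq_card; apply/subsetP => x' /[1!inE] /andP[x'S x'A].
    have := Ax_uniq (subsetP SU _ xS) (subsetP SU _ x'S) xA x'A => ->; by rewrite inE.
  rewrite leqn0; apply/eqP; apply: eq_card0 => x.
  apply/negbTE/negP; rewrite inE => /andP[xS xA]; move/negP: Hd; apply; exact: Ax_dist xS xA.
rewrite card_ffun !card_ord.
have hb2 : k.+1 ^ (#|U|.-1) <= 2 * k ^ (#|U|.-1).
  by apply: (bern2 (K:=k.+1)); move: hU; rewrite /U; lia.
have hn : k.+1 ^ n = k.+1 * k.+1 ^ (#|U|.-1) * k.+1 ^ (n - #|U|).
  rewrite -expnS -expnD; congr (_ ^ _); lia.
rewrite hn.
move: low hb2; set X := k ^ _; set Y := k.+1 ^ (#|U|.-1); set Z := k.+1 ^ (n - #|U|) => low hb2.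
have h3 : a * s * X * Z <= a * #|[set w : {ffun 'I_n -> 'I_k.+1} | dist (pool w) (e, f)]|.
  rewrite -mulnA -mulnA leq_mul2l; apply/orP; right.
  apply: (@leq_trans (#|S| * (X*Z))) _ low.
  by rewrite leq_mul2r; apply/orP; right; exact: hs.
apply: (@leq_trans (a*s*X*Z)) _ h3.
rewrite leq_mul2r; apply/orP; right.
apply: (@leq_trans (k.+1 * (2*X))); first by rewrite leq_mul2l hb2 orbT.
by rewrite mulnA leq_mul2r mulnC ha orbT.
Qed.


Lemma map_nodist n (g h : {set 'I_n}) Ts :
  map (test_resp g) Ts = map (test_resp h) Ts -> ~~ has (fun T => dist T (g, h)) Ts.
Proof.
move/eq_in_map => H; apply/hasPn => T /H; rewrite /dist /= => ->; by rewrite eqxx.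
Qed.

Lemma test_diff n (e g T : {set 'I_n}) : test_resp e (T :\: g) = test_resp (e :\: g) T.
Proof.
rewrite /test_resp; congr (~~ (_ == _)); apply/setP => x; rewrite !inE; by case: (x \in T); case: (x \in g).
Qed.

Lemma test1 n (e : {set 'I_n}) x : test_resp e [set x] = (x \in e).
Proof.
rewrite /test_resp; case: (boolP (x \in e)) => xe.
  apply/set0Pn; exists x; by rewrite !inE eqxx.
apply/negbF/eqP/setP => y; rewrite !inE; apply/negbTE; apply/negP => /andP[/eqP -> ]; exact/negP.
Qed.

Lemma card_pairs n (G : {set {set 'I_n}}) (P : pred ({set 'I_n} * {set 'I_n})) L :
  #|G| <= 2 ^ L -> #|[set p in setX G G | P p]| < 2 ^ (2 * L + 1).
Proof.
move=> HG.
have h1 : #|[set p in setX G G | P p]| <= #|G| * #|G|.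
  rewrite -cardsX; apply: subset_leq_card; apply/subsetP => p; rewrite inE => /andP[] //.
have h2 : #|G| * #|G| <= 2 ^ L * 2 ^ L by apply: leq_mul.
have -> : 2 ^ (2 * L + 1) = 2 * (2 ^ L * 2 ^ L) by rewrite -expnD addn1 expnS; congr (_ * 2 ^ _); lia.
have : 0 < 2 ^ L by rewrite expn_gt0.
nia.
Qed.


Lemma dist_sym n (T : {set 'I_n}) g h : dist T (g, h) = dist T (h, g).
Proof. by rewrite /dist /= eq_sym. Qed.

Lemma main_nat n d t (E : {set {set 'I_n}}) : 0 < d -> 0 < t -> d <= 4 * t * t ->
  (forall e, e \in E -> #|e| <= d) ->
  exists A : three_stage n, finds A E /\
    ntests A E <= 50 * t * (2 * up_log 2 #|E| + 1) + d.
Proof.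
move=> d0 t0 dt Hd.
set L := up_log 2 #|E|; set b := 2 * L + 1.
have EL : #|E| <= 2 ^ L by apply: up_logP.
set P1 := [set p in setX E E | t <= #|p.1 :\: p.2|].
have [Ts1 [sz1 H1]] : exists Ts, size Ts <= 40 * t * b /\
    forall p, p \in P1 -> has (fun T => dist T p) Ts.
  apply: (@greedy_all n _ (@pool n (4 * d)) (40 * t) b P1).
  - by rewrite card_ffun !card_ord expn_gt0.
  - lia.
  - exact: card_pairs.
  move=> [g h]; rewrite !inE /= => /andP[/andP[gE hE] tle].
  apply: (prob (s := t) (D := 2 * d)) => //.
  - have := cardsU g h; have := Hd _ gE; have := Hd _ hE; lia.
  - lia.
  - nia.
pose F r1 := [set e in E | map (test_resp e) Ts1 == r1].
pose e0 r1 := if [pick e in F r1] is Some e then e else set0.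
pose s2 r1 := [seq [set x] | x <- enum (e0 r1)].
pose G r1 r2 := [set e in F r1 | map (test_resp e) (s2 r1) == r2].
pose G' r1 r2 := [set e :\: e0 r1 | e in G r1 r2].
pose P3 r1 r2 := [set p in setX (G' r1 r2) (G' r1 r2) | 0 < #|p.1 :\: p.2|].
have close : forall r1 g h, g \in F r1 -> h \in F r1 -> #|g :\: h| < t.
  move=> r1 g h; rewrite !inE => /andP[gE /eqP gr] /andP[hE /eqP hr].
  rewrite ltnNge; apply/negP => tle.
  have pP : (g, h) \in P1 by rewrite !inE gE hE tle.
  have := H1 _ pP; apply/negP; apply: map_nodist; by rewrite gr hr.
have e0F : forall r1 e, e \in F r1 -> e0 r1 \in F r1.
  move=> r1 e eF; rewrite /e0; case: pickP => [e' -> //|/(_ e)]; by rewrite eF.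
have e0d : forall r1, #|e0 r1| <= d.
  move=> r1; rewrite /e0; case: pickP => [e'|_]; last by rewrite cards0.
  by rewrite inE => /andP[/Hd].
have G'small : forall r1 r2 g, g \in G' r1 r2 -> #|g| <= t.
  move=> r1 r2 g /imsetP[e]; rewrite inE => /andP[eF _] ->.
  have := close _ _ _ eF (e0F _ _ eF); lia.
have H3 : forall r1 r2, exists Ts, (size Ts <= 10 * t * b) &&
    [forall p in P3 r1 r2, has (fun T => dist T p) Ts].
  move=> r1 r2.
  have [Ts [sz H]] : exists Ts, size Ts <= 10 * t * b /\
      forall p, p \in P3 r1 r2 -> has (fun T => dist T p) Ts.
    apply: (@greedy_all n _ (@pool n (4 * t)) (10 * t) b (P3 r1 r2)).
    - by rewrite card_ffun !card_ord expn_gt0.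
    - lia.
    - apply: card_pairs; apply: leq_trans EL.
      apply: leq_trans (leq_imset_card _ _) _.
      apply: subset_leq_card; apply/subsetP => e; rewrite !inE => /andP[/andP[] //].
    move=> [g h]; rewrite !inE /= => /andP[/andP[gG hG] pos].
    apply: (prob (s := 1) (D := 2 * t)) => //.
    - have := cardsU g h; have := G'small _ _ _ gG; have := G'small _ _ _ hG; lia.
    - lia.
    - lia.
  exists Ts; rewrite sz /=; apply/forallP => p; apply/implyP => /H //.
pose Ts3 r1 r2 := xchoose (H3 r1 r2).
have Ts3P : forall r1 r2, (size (Ts3 r1 r2) <= 10 * t * b) &&
    [forall p in P3 r1 r2, has (fun T => dist T p) (Ts3 r1 r2)].
  move=> r1 r2; exact: xchooseP (H3 r1 r2).
pose s3 r1 r2 := [seq T :\: e0 r1 | T <- Ts3 r1 r2].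
exists (ThreeStage Ts1 s2 s3); split.
  move=> e f eE fE nef; rewrite /responses /resp3 /resp2 /resp1 /= => -[R1 R2 R3].
  set r1 := map (test_resp e) Ts1 in R1 R2 R3.
  rewrite -R1 in R2 R3.
  set r2 := map (test_resp e) (s2 r1) in R2 R3.
  rewrite -R2 in R3.
  have eF : e \in F r1 by rewrite inE eE eqxx.
  have fF : f \in F r1 by rewrite inE fE R1 eqxx.
  have eG : e \in G r1 r2 by rewrite inE eF eqxx.
  have fG : f \in G r1 r2 by rewrite inE fF R2 eqxx.
  have Inter : forall x, x \in e0 r1 -> (x \in e) = (x \in f).
    move=> x xe0; have /eq_in_map H := R2.
    rewrite -!test1; apply: H; apply: map_f; by rewrite mem_enum.
  have neq : e :\: e0 r1 != f :\: e0 r1.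
    apply/eqP => H; apply: nef; apply/setP => x.
    case: (boolP (x \in e0 r1)) => xe0; first exact: Inter.
    by have := congr1 (fun S : {set 'I_n} => x \in S) H; rewrite /= !inE xe0.
  have e'G : e :\: e0 r1 \in G' r1 r2 by apply: imset_f.
  have f'G : f :\: e0 r1 \in G' r1 r2 by apply: imset_f.
  have [T TTs dT] : exists2 T, T \in Ts3 r1 r2 & dist T (e :\: e0 r1, f :\: e0 r1).
    have /andP[_ /forallP HP] := Ts3P r1 r2.
    case: (boolP (0 < #|(e :\: e0 r1) :\: (f :\: e0 r1)|)) => pos.
      have := HP (e :\: e0 r1, f :\: e0 r1); rewrite !inE /= e'G f'G pos /=.
      by move/hasP.
    case: (boolP (0 < #|(f :\: e0 r1) :\: (e :\: e0 r1)|)) => pos'.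
      have := HP (f :\: e0 r1, e :\: e0 r1); rewrite !inE /= e'G f'G pos' /=.
      by move/hasP => [T TT dT]; exists T => //; rewrite dist_sym.
    exfalso; move/negP: neq; apply; rewrite eqEsubset.
    move: pos pos'; rewrite -!leqNgt !leqn0 !cards_eq0 !setD_eq0 => -> -> //.
  have /eq_in_map H := R3.
  have := H (T :\: e0 r1) (map_f _ TTs).
  rewrite !test_diff => Heq.
  by move: dT; rewrite /dist /= Heq eqxx.
rewrite /ntests; apply/bigmax_leqP => e eE.
rewrite /ntests_for /resp2 /resp1 /= size_map size_map -cardE.
have := e0d (map (test_resp e) Ts1).
set r1 := map (test_resp e) Ts1.
set r2 := map (test_resp e) (s2 r1).
have /andP[sz3 _] := Ts3P r1 r2.
move: sz1 sz3; rewrite /b -!mulnA; move: (t * (2 * L + 1)) => X; move: (size Ts1) (size (Ts3 r1 r2)) #|e0 r1| => x y z; lia.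
Qed.


Lemma INR_mul a b : INR (a * b)%N = (INR a * INR b)%R.
Proof. exact: mult_INR. Qed.
Lemma INR_add a b : INR (a + b)%N = (INR a + INR b)%R.
Proof. exact: plus_INR. Qed.

Lemma ln_le' x y : (0 < x)%R -> (x <= y)%R -> (ln x <= ln y)%R.
Proof.
move=> x0 [xy|<-]; last by apply: Rle_refl.
by apply: Rlt_le; apply: ln_increasing.
Qed.

Lemma INR_exp2 k : INR (2 ^ k)%N = (2 ^ k)%R.
Proof.
elim: k => [|k IH]; first by [].
by rewrite expnS INR_mul IH /=.
Qed.

Lemma logbound (m : nat) : (0 < m)%N -> (INR (up_log 2 m) * ln 2 <= 2 * ln (INR m))%R.
Proof.
move=> m0.
have lm0 : (0 <= ln (INR m))%R.
  rewrite -ln_1; apply: ln_le'; first lra.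
  have := le_INR 1 m; rewrite /=; apply; apply/leP; lia.
case: (boolP (0 < up_log 2 m)%N) => L0; last first.
  have -> : up_log 2 m = 0%N by lia.
  rewrite /=; lra.
have m2 : (1 < m)%N by move: L0; rewrite up_log_gt0 => /andP[].
have hg := up_log_gtn (erefl : (1 < 2)%N) m2.
set L := up_log 2 m in L0 hg *.
have q0 : (0 < ln 2)%R by have := ln_lt_2; lra.
have h1 : (INR L.-1 * ln 2 < ln (INR m))%R.
  rewrite -ln_pow; last lra.
  apply: ln_increasing; first by apply: pow_lt; lra.
  rewrite -INR_exp2.
  apply: lt_INR; apply/ltP; exact: hg.
have h2 : (ln 2 <= ln (INR m))%R.
  apply: ln_le'; first lra.
  have := le_INR 2 m; rewrite /=; apply; apply/leP; lia.
have -> : L = (L.-1).+1 by lia.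
rewrite S_INR; lra.
Qed.

Theorem corollary3 :
  exists C : R, (0 < C)%R /\
    forall (n d : nat) (E : {set {set 'I_n}}),
      (0 < n)%N -> (0 < d)%N ->
      E != set0 ->
      (forall e, e \in E -> (#|e| <= d)%N) ->
      exists A : three_stage n,
        finds A E /\
        (INR (ntests A E) <= C * (sqrt (INR d) * ln (INR #|E|) + INR d))%R.
Proof.
have q0 : (0 < ln 2)%R by have := ln_lt_2; lra.
exists (200 / ln 2 + 51)%R; split.
  have : (0 < 200 / ln 2)%R by apply: Rdiv_lt_0_compat; lra.
  lra.
move=> n d E n0 d0 E0 Hd.
pose t := Nat.sqrt d.
have [st1 st2] := Nat.sqrt_spec d (le_0_n d).
have t0 : (0 < t)%N by move: st2; rewrite -/t; case: t => //=; lia.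
have dt : (d <= 4 * t * t)%N by move: st2; rewrite -/t; nia.
have td : (t * t <= d)%N by move: st1; rewrite -/t; lia.
have [A [fA nA]] := main_nat d0 t0 dt Hd.
exists A; split=> //.
set L := up_log 2 #|E| in nA.
have E1 : (0 < #|E|)%N by rewrite card_gt0.
have hL := @logbound #|E| E1; rewrite -/L in hL.
have nB : (ntests A E <= 100 * t * L + 51 * d)%N.
  apply: leq_trans nA _.
  have : (t <= d)%N by nia.
  nia.
have hN : (INR (ntests A E) <= INR (100 * t * L + 51 * d))%R by apply: le_INR; apply/leP.
apply: (Rle_trans _ _ _ hN).
rewrite INR_add !INR_mul.
set s := sqrt (INR d); set l := ln (INR #|E|).
have s0 : (0 <= s)%R by apply: sqrt_pos.
have l0 : (0 <= l)%R.
  rewrite /l -ln_1; apply: ln_le'; first lra.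
  have := le_INR 1 #|E|; rewrite /=; apply; apply/leP; exact: E1.
have ts : (INR t <= s)%R.
  rewrite /s -(sqrt_square (INR t)); last by apply: pos_INR.
  apply: sqrt_le_1_alt; rewrite -INR_mul; apply: le_INR; apply/leP; exact: td.
have L0 : (0 <= INR L)%R by apply: pos_INR.
have d0' : (0 <= INR d)%R by apply: pos_INR.
have h1 : (INR t * INR L <= s * INR L)%R by apply: Rmult_le_compat_r.
have h2 : (s * INR L <= 2 * (s * l) / ln 2)%R.
  apply: (Rmult_le_reg_r (ln 2)) => //.
  have -> : (2 * (s * l) / ln 2 * ln 2 = 2 * (s * l))%R by field; lra.
  have : (s * (INR L * ln 2) <= s * (2 * l))%R by apply: Rmult_le_compat_l.
  lra.
have h3 : (0 <= s * l)%R by apply: Rmult_le_pos.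
have h4 : (0 <= 200 / ln 2 * INR d)%R.
  apply: Rmult_le_pos => //; apply: Rlt_le; apply: Rdiv_lt_0_compat; lra.
have e2 : (2 * (s * l) / ln 2 = (200 / ln 2 * (s * l)) / 100)%R by field; lra.
rewrite e2 in h2.
have -> : (INR 100 = 100)%R by rewrite /=; lra.
have -> : (INR 51 = 51)%R by rewrite /=; lra.
nra.
Qed.
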